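(* The bracket induced on $\mathbf T_{m+1}$ by ${\rm PB}_1({\rm R};\mathcal F)$ is given, for $1\le i,j\le m$ and all $k$, by $\{b_k,b_{k+1}\}_1=\alpha a_k^{(1)}$; $\{b_k,a_k^{(j)}\}_1=-a_k^{(j)}$, $\{a_k^{(j)},b_{k+j}\}_1=-a_k^{(j)}$; $\{b_k,a_{k+1}^{(j)}\}_1=\alpha a_k^{(j+1)}$, $\{a_k^{(j)},b_{k+j+1}\}_1=\alpha a_k^{(j+1)}$; $\{a_k^{(i)},a_{k+i}^{(j)}\}_1=-a_k^{(i+j)}$; $\{a_k^{(i)},a_{k+i+1}^{(j)}\}_1=\alpha a_k^{(i+j+1)}$; all other brackets between coordinates (except those obtained by antisymmetry) vanish. (Here $N\ge2m+2$.)
   Context: Periodic lattice setting: $N\ge2$, $m\ge1$; $\mathfrak g=\{X(\lambda)\in gl(N)[\lambda,\lambda^{-1}]:\Omega X(\lambda)\Omega^{-1}=X(\omega\lambda)\}$, $\omega=e^{2\pi i/N}$, $\Omega=\mathrm{diag}(1,\omega,\dots,\omega^{N-1})$, matrix indices and lattice subscripts modulo $N$; $\langle X,Y\rangle$ = coefficient of $\lambda^0$ in $\mathrm{tr}(XY)$; $\pi_+,\pi_-$ projections onto nonnegative, resp. negative, powers of $\lambda$ (graded pieces $\mathfrak g_p=\{\lambda^p\sum_{j-k\equiv p}x_{jk}E_{jk}\}$); ${\rm R}=\pi_+-\pi_-$. Gradient: $\langle\nabla\varphi(L),M\rangle=\frac{d}{d\varepsilon}\varphi(L+\varepsilon M)|_{\varepsilon=0}$.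 $\alpha$ real; $\mathcal E=\lambda\sum_kE_{k+1,k}$; $\mathcal F=I-\alpha\mathcal E$. $[X,Y]^{(\mathcal F)}=X\mathcal FY-Y\mathcal FX$; ${\rm PB}_1({\rm R};\mathcal F)$: $\{\varphi,\psi\}_1(L)=\frac12\langle[{\rm R}\nabla\varphi,\nabla\psi]^{(\mathcal F)}+[\nabla\varphi,{\rm R}\nabla\psi]^{(\mathcal F)},L\rangle$. $\mathbf T_{m+1}$ (a Poisson submanifold for this bracket) = set of $T=\mathcal E+\sum_kb_kE_{kk}+\sum_{j=1}^m\lambda^{-j}\sum_ka_k^{(j)}E_{k,k+j}$; coordinates $b_k(X)$ = coefficient of $\lambda^0E_{kk}$, $a_k^{(j)}(X)$ = coefficient of $\lambda^{-j}E_{k,k+j}$; convention $a_k^{(i)}=0$ for $i>m$. *)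

(* Defs.v *)
From HB Require Import structures.
From mathcomp Require Import all_boot all_order all_algebra.
From mathcomp Require Import boolp classical_sets fsbigop.
Set Implicit Arguments.
Unset Strict Implicit.
Unset Printing Implicit Defensive.
Import Order.TTheory GRing.Theory Num.Theory.
Local Open Scope ring_scope.

(* Throughout, the matrix size is N := n.+1 and C is the ground field (e.g. C).
   A loop X(lambda) = sum_p lambda^p X_p is represented by its coefficient
   function p |-> X_p (with p : int). *)
Section Loops.
Variables (C : numClosedFieldType) (n : nat).
Local Notation N := n.+1.

Definition loop := int -> 'M[C]_N.

Definition sh (k : 'I_N) (j : nat) : 'I_N := inord ((k + j) %% N).

(* the twisted loop algebra g: Laurent polynomials (finite support) whose
   lambda^p coefficient lies in g_p, i.e. is supported on entries (j,k)
   with j - k = p mod N *)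
Definition in_g (X : loop) : Prop :=
  (exists K : nat, forall p : int, (K < `|p|)%N -> X p = 0) /\
  (forall (p : int) (r c : 'I_N), X p r c != 0 ->
     (N%:Z %| (r%:Z - c%:Z - p))%Z).

Definition ladd (X Y : loop) : loop := fun p => X p + Y p.
Definition lsub (X Y : loop) : loop := fun p => X p - Y p.
Definition lscale (t : C) (X : loop) : loop := fun p => t *: X p.

(* product of Laurent matrix polynomials (finite sums: X has finite support) *)
Definition lmul (X Y : loop) : loop :=
  fun p => (\sum_(q \in [set: int]) (X q *m Y (p - q)))%R.

Definition pairing (X Y : loop) : C := \tr (lmul X Y 0).

Definition pi_plus (X : loop) : loop := fun p => if (0 <= p)%R then X p else 0.
Definition pi_minus (X : loop) : loop := fun p => if (p < 0)%R then X p else 0.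
Definition Rop (X : loop) : loop := lsub (pi_plus X) (pi_minus X).

Definition Emat : 'M[C]_N := \matrix_(r, c) (r == sh c 1)%:R.
Definition calE : loop := fun p => if p == 1 then Emat else 0.
Definition calF (alpha : C) : loop :=
  fun p => if p == 0 then 1%:M else if p == 1 then - alpha *: Emat else 0.

Definition brF (alpha : C) (X Y : loop) : loop :=
  lsub (lmul (lmul X (calF alpha)) Y) (lmul (lmul Y (calF alpha)) X).

Definition pb1_grad (alpha : C) (GX GY L : loop) : C :=
  2^-1 * pairing (ladd (brF alpha (Rop GX) GY) (brF alpha GX (Rop GY))) L.

Definition deriv0 (f : C -> C) (d : C) : Prop :=
  forall e : C, 0 < e -> exists2 delta : C, 0 < delta &
    forall t : C, t \is Num.real -> t != 0 -> `|t| < delta ->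
      `|(f t - f 0) / t - d| < e.

Definition is_gradient (phi : loop -> C) (L G : loop) : Prop :=
  in_g G /\ forall M, in_g M -> deriv0 (fun t => phi (ladd L (lscale t M))) (pairing G M).

Definition PB1_is (alpha : C) (phi psi : loop -> C) (L : loop) (v : C) : Prop :=
  (exists G, is_gradient phi L G) /\ (exists G, is_gradient psi L G) /\
  forall G1 G2, is_gradient phi L G1 -> is_gradient psi L G2 ->
    pb1_grad alpha G1 G2 L = v.

Definition in_T (m : nat) (T : loop) : Prop :=
  exists (b : 'I_N -> C) (a : nat -> 'I_N -> C),
    T = fun p => if p == 1 then Emat
                 else if p == 0 then \matrix_(r, c) ((r == c)%:R * b r)
                 else if ((- (m%:Z) <= p) && (p <= -1))%R then
                   \matrix_(r, c) ((c == sh r `|p|%N)%:R * a `|p|%N r)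
                 else 0.

Inductive pcoord := Cb of 'I_N | Ca of nat & 'I_N.

Definition bcoord (k : 'I_N) (X : loop) : C := X 0 k k.
Definition acoord (j : nat) (k : 'I_N) (X : loop) : C := X (- (j%:Z)) k (sh k j).

Definition coordfun (c : pcoord) : loop -> C :=
  match c with Cb k => bcoord k | Ca j k => acoord j k end.

Definition valid_coord (m : nat) (c : pcoord) : bool :=
  match c with Cb _ => true | Ca j _ => (1 <= j <= m)%N end.

Definition aT (m i : nat) (k : 'I_N) (X : loop) : C :=
  if (i <= m)%N then acoord i k X else 0.

(* the listed (directed) brackets {c1,c2}_1 *)
Definition rule_val (alpha : C) (m : nat) (c1 c2 : pcoord) (X : loop) : C :=
  match c1, c2 with
  | Cb k, Cb l => if l == sh k 1 then alpha * aT m 1 k X else 0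
  | Cb k, Ca j l =>
      (if l == k then - aT m j k X else 0)
      + (if l == sh k 1 then alpha * aT m j.+1 k X else 0)
  | Ca j k, Cb l =>
      (if l == sh k j then - aT m j k X else 0)
      + (if l == sh k j.+1 then alpha * aT m j.+1 k X else 0)
  | Ca i k, Ca j l =>
      (if l == sh k i then - aT m (i + j) k X else 0)
      + (if l == sh k i.+1 then alpha * aT m (i + j).+1 k X else 0)
  end.

(* the full table: listed brackets, those obtained by antisymmetry, 0 otherwise *)
Definition expected (alpha : C) (m : nat) (c1 c2 : pcoord) (X : loop) : C :=
  rule_val alpha m c1 c2 X - rule_val alpha m c2 c1 X.

End Loops.

(* Main.v *)
Require Import Defs.
From HB Require Import structures.
From mathcomp Require Import all_boot all_order all_algebra.
From mathcomp Require Import boolp classical_sets fsbigop.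
From mathcomp Require Import zify ring lra.
Set Implicit Arguments.
Unset Strict Implicit.
Unset Printing Implicit Defensive.
Import Order.TTheory GRing.Theory Num.Theory.
Local Open Scope ring_scope.
Section A.
Variables (C : numClosedFieldType) (N : nat).
Implicit Types x y z w r c : 'I_N.

Lemma dmulX x y (M : 'M[C]_N) : delta_mx x y *m M = \matrix_(i, j) ((i == x)%:R * M y j).
Proof.
apply/matrixP => i j; rewrite !mxE (bigD1 y) //= big1 ?addr0 => [|l ly].
  by rewrite mxE eqxx andbT.
by rewrite mxE (negbTE ly) andbF mul0r.
Qed.

Lemma Xmuld x y (M : 'M[C]_N) : M *m delta_mx x y = \matrix_(i, j) (M i x * (j == y)%:R).
Proof.
apply/matrixP => i j; rewrite !mxE (bigD1 x) //= big1 ?addr0 => [|l ly].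
  by rewrite mxE eqxx.
by rewrite mxE (negbTE ly) mulr0.
Qed.

Lemma dNd x y z w (M : 'M[C]_N) : delta_mx x y *m M *m delta_mx z w = M y z *: delta_mx x w.
Proof.
rewrite dmulX Xmuld; apply/matrixP => i j; rewrite !mxE.
by case: (i == x); case: (j == w); rewrite /= ?mulr1 ?mul1r ?mulr0 ?mul0r.
Qed.

Lemma tr_dX x w (M : 'M[C]_N) : \tr (delta_mx x w *m M) = M w x.
Proof.
rewrite dmulX /mxtrace (bigD1 x) //= big1 ?addr0 => [|i ix]; rewrite mxE.
  by rewrite eqxx mul1r.
by rewrite (negbTE ix) mul0r.
Qed.

Lemma tr_Xd (X : 'M[C]_N) r c : \tr (X *m delta_mx c r) = X r c.
Proof. by rewrite mxtrace_mulC tr_dX. Qed.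

Lemma tr_comm x y z w (Nm M : 'M[C]_N) :
  \tr ((delta_mx x y *m Nm *m delta_mx z w - delta_mx z w *m Nm *m delta_mx x y) *m M)
  = Nm y z * M w x - Nm w x * M y z.
Proof.
by rewrite mulmxBl !dNd linearB /= -!scalemxAl !linearZ /= !tr_dX.
Qed.
End A.

Section Aux.
Variables (C : numClosedFieldType) (n : nat).
Local Notation N := n.+1.
Local Notation loop := (loop C n).

Lemma fsum_seq (V : nmodType) (r : seq int) (F : int -> V) : uniq r ->
  (forall q, q \notin r -> F q = 0) ->
  \sum_(q \in [set: int]) F q = \sum_(q <- r) F q.
Proof.
move=> ur H; rewrite [RHS]fsbig_seq //; symmetry; rewrite (fsbig_widen [set` r] setT) // => q [_ /=].
by move=> Hq; apply: H; apply/negP.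
Qed.

Definition single (p : int) (A : 'M[C]_N) : loop := fun q => if q == p then A else 0.

Lemma lmul_singlel p A (Y : loop) : lmul (single p A) Y = fun r => A *m Y (r - p).
Proof.
apply: funext => r; rewrite /lmul (@fsum_seq _ [:: p]) // ?big_seq1 /single ?eqxx //.
by move=> q; rewrite inE => /negbTE ->; rewrite mul0mx.
Qed.

Lemma lmul_singler (X : loop) p A : lmul X (single p A) = fun r => X (r - p) *m A.
Proof.
apply: funext => r; rewrite /lmul (@fsum_seq _ [:: r - p]) // ?big_seq1 /single.
  have -> : r - (r - p) = p by ring.
  by rewrite eqxx.
move=> q; rewrite inE => Hq; case: eqP; last by rewrite mulmx0.
move=> E; exfalso; move/negP: Hq; apply; apply/eqP; rewrite -E; ring.
Qed.

End Aux.

Section Aux2.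
Variables (C : numClosedFieldType) (n : nat).
Local Notation N := n.+1.
Local Notation loop := (loop C n).
Implicit Types k l : 'I_N.

Lemma sh_val k j : (sh k j : nat) = ((k + j) %% N)%N.
Proof. by rewrite /sh inordK // ltn_pmod. Qed.

Lemma sh_add k i j : sh (sh k i) j = sh k (i + j).
Proof. by apply: val_inj => /=; rewrite !sh_val modnDml addnA. Qed.

Lemma sh0 k : sh k 0 = k.
Proof. by apply: val_inj => /=; rewrite sh_val addn0 modn_small. Qed.

Lemma T_neg m (T : loop) (s : nat) : in_T m T -> (0 < s)%N ->
  T (- s%:Z) = \matrix_(r, c) ((c == sh r s)%:R * aT m s r T).
Proof.
move=> [b [a ->]] s0; rewrite /aT /acoord.
have -> : (- s%:Z == 1) = false by apply/eqP; lia.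
have -> : (- s%:Z == 0) = false by apply/eqP; lia.
rewrite abszN absz_nat.
case: (leqP s m) => sm.
  have -> : ((- m%:Z <= - s%:Z) && (- s%:Z <= -1)) = true by apply/andP; split; lia.
  by apply/matrixP => r c; rewrite !mxE eqxx mul1r.
have -> : ((- m%:Z <= - s%:Z) && (- s%:Z <= -1)) = false by apply/negbTE/negP => /andP [] ; lia.
by apply/matrixP => r c; rewrite !mxE mulr0.
Qed.

Lemma T_zero m (T : loop) : in_T m T ->
  T 0 = \matrix_(r, c) ((r == c)%:R * bcoord r T).
Proof.
move=> [b [a ->]]; rewrite /bcoord /=.
by apply/matrixP => r c; rewrite !mxE eqxx mul1r.
Qed.

Lemma Rop_single (p : int) (A : 'M[C]_N) : 0 <= p -> Rop (single p A) = single p A.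
Proof.
move=> p0; apply: funext => r; rewrite /Rop /lsub /pi_plus /pi_minus /single.
case: eqP => [->|_]; last by rewrite !if_same subr0.
by rewrite p0 ltNge p0 /= subr0.
Qed.


Lemma pb1_single alpha (p q : nat) (A B : 'M[C]_N) (L : loop) :
  pb1_grad alpha (single p%:Z A) (single q%:Z B) L =
  \tr ((A *m 1%:M *m B - B *m 1%:M *m A) *m L (- (p + q)%N%:Z))
  + \tr ((A *m (- alpha *: Emat C n) *m B - B *m (- alpha *: Emat C n) *m A)
          *m L (- (p + q)%N%:Z - 1)).
Proof.
rewrite /pb1_grad !Rop_single // /brF.
set s := (p + q)%N%:Z.
set W := ladd _ _.
have HW : W = fun r => 2%:R *: (A *m calF n alpha (r - s) *m B - B *m calF n alpha (r - s) *m A).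
  apply: funext => r; rewrite /W /ladd /lsub !lmul_singler !lmul_singlel.
  have -> : r - q%:Z - p%:Z = r - s by rewrite /s PoszD; ring.
  have -> : r - p%:Z - q%:Z = r - s by rewrite /s PoszD; ring.
  by rewrite scaler_nat mulr2n.
rewrite /pairing HW /lmul (@fsum_seq _ [:: s; s + 1]) //; last first.
  move=> r; rewrite !inE negb_or => /andP [H1 H2].
  rewrite /calF.
  have -> : (r - s == 0) = false by apply/negbTE; apply: contra H1 => /eqP H; apply/eqP; lia.
  have -> : (r - s == 1) = false by apply/negbTE; apply: contra H2 => /eqP H; apply/eqP; lia.
  by rewrite !mulmx0 !mul0mx subrr scaler0 mul0mx.
  by rewrite /= inE; apply/negP => /eqP; lia.
rewrite big_cons big_seq1 subrr.
have -> : s + 1 - s = 1 by ring.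
rewrite /calF /= !add0r.
have -> : - (s + 1) = - s - 1 by ring.
rewrite linearD /= -!scalemxAl !linearZ /= -mulrDr mulrA mulVf ?mul1r //.
by rewrite pnatr_eq0.
Qed.

Definition gdeg (c : pcoord n) : nat := match c with Cb _ => 0%N | Ca j _ => j end.
Definition gmat (c : pcoord n) : 'M[C]_N :=
  match c with Cb k => delta_mx k k | Ca j k => delta_mx (sh k j) k end.
Definition grad (c : pcoord n) : loop := single (gdeg c)%:Z (gmat c).

Lemma pairing_singler (X : loop) p (A : 'M[C]_N) :
  pairing X (single p A) = \tr (X (- p) *m A).
Proof. by rewrite /pairing lmul_singler sub0r. Qed.

Lemma pairing_grad c (M : loop) : pairing (grad c) M = coordfun c M.
Proof.
rewrite /pairing /grad lmul_singlel sub0r.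
case: c => [k|j k] /=; rewrite tr_dX //.
Qed.

Lemma in_g_grad c : in_g (grad c).
Proof.
split.
  exists (gdeg c) => p Hp; rewrite /grad /single; case: eqP => // E.
  by rewrite E absz_nat ltnn in Hp.
move=> p r c'; rewrite /grad /single; case: (p =P _) => [->|_]; last by rewrite mxE eqxx.
case: c => [k|j k] /=; rewrite mxE;
  (case: (r =P _) => [->|_]; [case: (c' =P _) => [->|_] | ]); rewrite /= ?eqxx //= => _.
  by apply/dvdzP; exists 0; ring.
apply/dvdzP; exists (- ((k + j) %/ N)%N%:Z); rewrite sh_val.
have := divn_eq (k + j) N; lia.
Qed.

Lemma grad_unique (G1 G2 : loop) : in_g G1 -> in_g G2 ->
  (forall M, in_g M -> pairing G1 M = pairing G2 M) -> G1 = G2.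
Proof.
move=> [_ H1] [_ H2] H; apply: funext => p; apply/matrixP => r c.
case D: (N%:Z %| r%:Z - c%:Z - p)%Z; last first.
  by rewrite (eqP (contraFT (H1 p r c) D)) (eqP (contraFT (H2 p r c) D)).
have Hs : in_g (single (- p) (delta_mx c r : 'M[C]_N)).
  split.
    exists `|p|%N => q Hq; rewrite /single; case: eqP => // E.
    by rewrite E abszN ltnn in Hq.
  move=> q r' c'; rewrite /single; case: (q =P _) => [->|_]; last by rewrite mxE eqxx.
  rewrite mxE;
  (case: (r' =P _) => [->|_]; [case: (c' =P _) => [->|_] | ]); rewrite /= ?eqxx //= => _.
  case/dvdzP: D => z Hz; apply/dvdzP; exists (- z); lia.
by have := H _ Hs; rewrite !pairing_singler opprK !tr_Xd.
Qed.

Lemma coord_lin c (L M : loop) t :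
  coordfun c (ladd L (lscale t M)) = coordfun c L + t * coordfun c M.
Proof. by case: c => [k|j k]; rewrite /= /bcoord /acoord /ladd /lscale !mxE. Qed.

Lemma is_grad_pairing c (L G : loop) : is_gradient (coordfun c) L G ->
  forall M, in_g M -> pairing G M = coordfun c M.
Proof.
move=> [_ HG] M HM; have D := HG M HM.
apply/eqP; rewrite eq_sym -subr_eq0; apply/negP => nz.
have e0 : 0 < `|coordfun c M - pairing G M| by rewrite normr_gt0; apply/negP.
have [d d0 Hd] := D _ e0.
have [t0 td] := midf_lt d0; rewrite add0r in t0 td.
have := Hd (d / 2) (gtr0_real t0) (lt0r_neq0 t0).
rewrite gtr0_norm // td => /(_ isT).
rewrite !coord_lin mul0r addr0 addrAC subrr add0r [_ / 2 * _]mulrC mulfK ?(lt0r_neq0 t0) //.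
by rewrite distrC ltxx.
Qed.

Lemma grad_is c (L : loop) : is_gradient (coordfun c) L (grad c).
Proof.
split; first exact: in_g_grad.
move=> M _ e e0; exists 1 => // t _ t0 _.
rewrite !coord_lin mul0r addr0 addrAC subrr add0r [t * _]mulrC mulfK // pairing_grad.
by rewrite subrr normr0.
Qed.

Lemma grad_eq c (L G : loop) : is_gradient (coordfun c) L G -> G = grad c.
Proof.
move=> HG; apply: grad_unique; first by case: HG.
  exact: in_g_grad.
by move=> M HM; rewrite (is_grad_pairing HG) // pairing_grad.
Qed.

Lemma condK (a b : 'I_N) (P : bool) (x : C) : (a == b -> P) ->
  (a == b)%:R * (P%:R * x) = (a == b)%:R * x.
Proof. by case: (a == b) => H; [rewrite (H isT) mulr1n !mul1r | rewrite mulr0n !mul0r]. Qed.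

End Aux2.

Ltac splitb := repeat match goal with |- context [(?a == ?b)] => case: (a == b) end; rewrite /=; ring.
Ltac sidec := move=> /eqP ->; rewrite ?sh_add; apply/eqP; congr sh; lia.


Theorem mainTheorem7 (C : numClosedFieldType) (n m : nat) (alpha : C) :
  (1 <= m)%N -> (2 * m + 2 <= n.+1)%N -> alpha \is Num.real ->
  forall c1 c2 : pcoord n, valid_coord m c1 -> valid_coord m c2 ->
  forall T : loop C n, in_T m T ->
    PB1_is alpha (coordfun c1) (coordfun c2) T (expected alpha m c1 c2 T).
Proof.
move=> m1 mN ar c1 c2 v1 v2 T HT.
split; first by exists (@grad C n c1); exact: grad_is.
split; first by exists (@grad C n c2); exact: grad_is.
move=> G1 G2 /grad_eq -> /grad_eq ->.
rewrite /grad pb1_single.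
have -> : - (gdeg c1 + gdeg c2)%N%:Z - 1 = - (gdeg c1 + gdeg c2).+1%:Z by lia.
rewrite (T_neg HT (ltn0Sn (gdeg c1 + gdeg c2))).
case: c1 v1 => [k|i k] v1; case: c2 v2 => [l|j l] v2 /=; rewrite !tr_comm !mxE ?add0n ?addn0.
- rewrite oppr0 (T_zero HT) !mxE /expected /=.
  rewrite [l == k]eq_sym; case: (k =P l) => [->|_] /=;
  [case: (l == sh l 1) | case: (k == sh l 1); case: (l == sh k 1)] => /=; ring.
- rewrite (T_neg HT) ?(andP v2).1 // ?mxE /expected /=.
  rewrite !sh_add ?addn1 -!mulrA !condK; try by sidec.
  splitb.
- rewrite (T_neg HT) ?(andP v1).1 // ?mxE /expected /=.
  rewrite !sh_add ?addn1 -!mulrA !condK; try by sidec.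
  splitb.
- rewrite (T_neg HT) ?addn_gt0 ?(andP v1).1 // ?mxE /expected /=.
  rewrite !sh_add ?addn1 -!mulrA !condK; try by sidec.
  rewrite [(j + i)%N]addnC; splitb.
Qed.
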